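(* On the Heisenberg group $H=\langle a,b,c\mid ac=ca,\ bc=cb,\ [a,b]=c\rangle$ there exist length functions $l$ which are not stable norms, i.e. there is no function $L:H\to[0,\infty)$ with $L(gh)\leq L(g)+L(h)$ and $L(g)=L(g^{-1})$ for all $g,h$ such that $l(g)=\lim_{k\to\infty}L(g^{k})/k$ for all $g\in H$.
   Context: A length function on a group $G$ is a function $l:G\to[0,\infty)$ such that $l(g^{n})=|n|\,l(g)$ for all $g\in G,n\in\mathbb{Z}$; $l(hgh^{-1})=l(g)$ for all $g,h$; and $l(ab)\leq l(a)+l(b)$ whenever $a,b$ commute. *)

(* Defs.v *)
From Stdlib Require Import ZArith Reals.
Open Scope R_scope.

(* Concrete model of the discrete Heisenberg group
   H = < a, b, c | ac = ca, bc = cb, [a,b] = c >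
   as Z^3 with (x,y,z)(x',y',z') = (x+x', y+y', z+z'+x*y').
   a = (1,0,0), b = (0,1,0), c = (0,0,1); then a b a^-1 b^-1 = c. *)
Record heis : Type := Heis { hx : Z; hy : Z; hz : Z }.

Definition hmul (g h : heis) : heis :=
  Heis (hx g + hx h)%Z (hy g + hy h)%Z (hz g + hz h + hx g * hy h)%Z.

Definition hone : heis := Heis 0 0 0.

Definition hinv (g : heis) : heis :=
  Heis (- hx g)%Z (- hy g)%Z (- hz g + hx g * hy g)%Z.

Definition ha : heis := Heis 1 0 0.
Definition hb : heis := Heis 0 1 0.
Definition hc : heis := Heis 0 0 1.

Fixpoint hpow_nat (g : heis) (n : nat) : heis :=
  match n with
  | O => hone
  | S m => hmul g (hpow_nat g m)
  end.

Definition hpow (g : heis) (n : Z) : heis :=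
  match n with
  | Z0 => hone
  | Zpos p => hpow_nat g (Pos.to_nat p)
  | Zneg p => hpow_nat (hinv g) (Pos.to_nat p)
  end.

Definition is_length_function (l : heis -> R) : Prop :=
  (forall g, 0 <= l g) /\
  (forall g (n : Z), l (hpow g n) = IZR (Z.abs n) * l g) /\
  (forall g h, l (hmul (hmul h g) (hinv h)) = l g) /\
  (forall a b, hmul a b = hmul b a -> l (hmul a b) <= l a + l b).

Definition is_stable_norm (l : heis -> R) : Prop :=
  exists L : heis -> R,
    (forall g, 0 <= L g) /\
    (forall g h, L (hmul g h) <= L g + L h) /\
    (forall g, L g = L (hinv g)) /\
    (forall g, Un_cv (fun k : nat => L (hpow_nat g k) / INR k) (l g)).

(* Main.v *)
Require Import Defs.
From Stdlib Require Import ZArith Reals Lia Lra.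
Open Scope R_scope.

Definition ell (g : heis) : R :=
  if Z.eq_dec (hx g) (hy g) then IZR (Z.abs (hx g)) else 0.

Lemma hxy_pow_nat g n :
  hx (hpow_nat g n) = (Z.of_nat n * hx g)%Z /\ hy (hpow_nat g n) = (Z.of_nat n * hy g)%Z.
Proof.
  induction n as [|n [IH1 IH2]]; [split; reflexivity|].
  change (hpow_nat g (S n)) with (hmul g (hpow_nat g n)). unfold hmul; cbn [hx hy]. rewrite IH1, IH2, Nat2Z.inj_succ. split; ring.
Qed.

Lemma hxy_pow g n :
  hx (hpow g n) = (n * hx g)%Z /\ hy (hpow g n) = (n * hy g)%Z.
Proof.
  destruct n as [|p|p]; unfold hpow.
  - split; reflexivity.
  - destruct (hxy_pow_nat g (Pos.to_nat p)) as [A B]. rewrite A, B, positive_nat_Z. split; reflexivity.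
  - destruct (hxy_pow_nat (hinv g) (Pos.to_nat p)) as [A B]. rewrite A, B, positive_nat_Z.
    unfold hinv; cbn [hx hy]. split; lia.
Qed.

Lemma ell_len : is_length_function ell.
Proof.
  unfold is_length_function, ell. split; [|split; [|split]].
  - intro g. destruct (Z.eq_dec _ _); [apply IZR_le; lia| lra].
  - intros g n. destruct (hxy_pow g n) as [A B]. rewrite A, B.
    destruct (Z.eq_dec n 0) as [->|Hn].
    + simpl. destruct (Z.eq_dec _ _); simpl; lra.
    + destruct (Z.eq_dec (hx g) (hy g)) as [E|E].
      * rewrite E. destruct (Z.eq_dec _ _) as [_|E']; [|lia].
        rewrite Z.abs_mul, mult_IZR. reflexivity.
      * destruct (Z.eq_dec _ _) as [E'|_]; [|lra].
        exfalso. apply E. apply (Z.mul_reg_l _ _ n); lia.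
  - intros g h. simpl.
    replace (hx h + hx g + - hx h)%Z with (hx g) by ring.
    replace (hy h + hy g + - hy h)%Z with (hy g) by ring. reflexivity.
  - intros a b H. assert (Hz := f_equal hz H). simpl in Hz. simpl.
    assert (C : (hx a * hy b = hx b * hy a)%Z) by lia.
    destruct (Z.eq_dec (hx a + hx b) (hy a + hy b)) as [E|E].
    + destruct (Z.eq_dec (hx a) (hy a)) as [Ea|Ea];
      destruct (Z.eq_dec (hx b) (hy b)) as [Eb|Eb].
      * rewrite <- plus_IZR. apply IZR_le. lia.
      * exfalso; lia.
      * exfalso; lia.
      * assert (U : (hx a + hx b = 0)%Z).
        { assert ((hx a + hx b) * (hx a - hy a) = 0)%Z by nia. nia. }
        rewrite U. simpl. lra.
    + destruct (Z.eq_dec (hx a) (hy a)); destruct (Z.eq_dec (hx b) (hy b));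
      try (apply Rplus_le_le_0_compat); try apply IZR_le; lia.
Qed.

Definition hd : heis := Heis 2 2 2.

Lemma pow_a k : hpow_nat ha k = Heis (Z.of_nat k) 0 0.
Proof. induction k; [reflexivity|]. cbn [hpow_nat]. rewrite IHk. unfold hmul; cbn [hx hy hz]. rewrite Nat2Z.inj_succ. unfold ha, hb, hd; cbn [hx hy hz]. f_equal; ring. Qed.
Lemma pow_b k : hpow_nat hb k = Heis 0 (Z.of_nat k) 0.
Proof. induction k; [reflexivity|]. cbn [hpow_nat]. rewrite IHk. unfold hmul; cbn [hx hy hz]. rewrite Nat2Z.inj_succ. unfold ha, hb, hd; cbn [hx hy hz]. f_equal; ring. Qed.
Lemma pow_d k : hpow_nat hd k = Heis (2 * Z.of_nat k) (2 * Z.of_nat k) (2 * Z.of_nat k * Z.of_nat k).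
Proof. induction k; [reflexivity|]. cbn [hpow_nat]. rewrite IHk. unfold hmul; cbn [hx hy hz]. rewrite Nat2Z.inj_succ. unfold ha, hb, hd; cbn [hx hy hz]. f_equal; ring. Qed.

Lemma d_decomp k :
  hpow_nat hd k = hmul (hmul (hpow_nat ha k) (hmul (hpow_nat hb k) (hpow_nat hb k))) (hpow_nat ha k).
Proof. rewrite pow_d, pow_a, pow_b. unfold hmul; cbn [hx hy hz]. f_equal; ring. Qed.

Theorem corollary25 :
  exists l : heis -> R, is_length_function l /\ ~ is_stable_norm l.
Proof.
  exists ell. split; [exact ell_len|].
  intros [L [L0 [Lsub [Linv Lcv]]]].
  assert (Ha : ell ha = 0) by (unfold ell, ha, hb; cbn [hx hy]; match goal with |- context [Z.eq_dec ?u ?v] => destruct (Z.eq_dec u v) end; [discriminate|reflexivity]).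
  assert (Hb : ell hb = 0) by (unfold ell, ha, hb; cbn [hx hy]; match goal with |- context [Z.eq_dec ?u ?v] => destruct (Z.eq_dec u v) end; [discriminate|reflexivity]).
  assert (Hd : ell hd = 2) by (unfold ell, hd; cbn [hx hy]; destruct (Z.eq_dec 2 2); [reflexivity|congruence]).
  destruct (Lcv ha (/4) ltac:(lra)) as [Na Pa].
  destruct (Lcv hb (/4) ltac:(lra)) as [Nb Pb].
  destruct (Lcv hd (/4) ltac:(lra)) as [Nd Pd].
  set (k := S (Na + Nb + Nd)).
  specialize (Pa k ltac:(unfold k; lia)). specialize (Pb k ltac:(unfold k; lia)).
  specialize (Pd k ltac:(unfold k; lia)).
  rewrite Ha in Pa. rewrite Hb in Pb. rewrite Hd in Pd.
  unfold R_dist in *.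
  apply Rabs_def2 in Pa. apply Rabs_def2 in Pb. apply Rabs_def2 in Pd.
  assert (Hle : L (hpow_nat hd k) <= 2 * L (hpow_nat ha k) + 2 * L (hpow_nat hb k)).
  { rewrite d_decomp.
    pose proof (Lsub (hmul (hpow_nat ha k) (hmul (hpow_nat hb k) (hpow_nat hb k))) (hpow_nat ha k)).
    pose proof (Lsub (hpow_nat ha k) (hmul (hpow_nat hb k) (hpow_nat hb k))).
    pose proof (Lsub (hpow_nat hb k) (hpow_nat hb k)). lra. }
  assert (Hk : 0 < INR k) by (apply lt_0_INR; unfold k; lia).
  assert (Hdiv : L (hpow_nat hd k) / INR k <= 2 * (L (hpow_nat ha k) / INR k) + 2 * (L (hpow_nat hb k) / INR k)).
  { unfold Rdiv. rewrite <- !Rmult_assoc, <- Rmult_plus_distr_r.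
    apply Rmult_le_compat_r; [left; apply Rinv_0_lt_compat; exact Hk| exact Hle]. }
  lra.
Qed.
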